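(* There exist an absolute constant $\varepsilon_0\in(0,\frac12)$ and an absolute constant $C>0$ such that the following holds. Let $0<\varepsilon<\varepsilon_0$, let $n\in\mathbb{N}$ with $n>10^5\varepsilon^{-9/2}$, and let $A\subset\mathbb{N}$ satisfy $$\forall x\in\llbracket n^{1/3},\varepsilon n\rrbracket,\ \forall m\in\llbracket 2x,2\varepsilon^{-1}x\rrbracket:\quad \big|A\cap\llbracket m-2x,m-x\rrbracket\big|>\varepsilon x^{2/3}\log\Big(\frac nx\Big).$$ Then there exists $B\subset\llbracket n^{1/3},2\varepsilon n\rrbracket$ with $|B|\le C\varepsilon^{-2/3}n^{1/3}$ and $$\forall t\in\llbracket 2n^{1/3},2n\rrbracket:\quad \big|\llbracket 2n^{1/3},t\rrbracket\setminus(A+B)\big|\le\varepsilon t.$$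
   Context: For real $u\le v$, $\llbracket u,v\rrbracket$ denotes the set of integers in $[u,v]$. $A+B=\{a+b:a\in A,b\in B\}$. *)

(* Defs.v *)
From mathcomp Require Export all_boot.
From Stdlib Require Export Reals.

Definition Rleb (x y : R) : bool := if Rle_dec x y then true else false.

(* k \in A + B  (A a subset of N given by its characteristic function,
   B a finite set of naturals given as a duplicate-free list):
   exists b in B, a in A with a + b = k. *)
Definition sumset_mem (A : pred nat) (B : seq nat) (k : nat) : bool :=
  has (fun b => (b <= k) && A (k - b)) B.

(* Main.v *)
Require Import Defs.
From mathcomp Require Import zify.
From Stdlib Require Import Lra Lia.
From Stdlib Require ZArith.

Lemma count_rev_iota (A : pred nat) (k a len : nat) : (a + len <= k + 1)%N ->
  count (fun b => A (k - b)%N) (iota a len) = count A (iota (k + 1 - a - len) len).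
Proof.
elim: len a => [|len IH] a H; first by [].
have E : forall c, count A (iota c len.+1) = (count A (iota c len) + A (c + len))%N.
  by move=> c; rewrite -[len.+1]addn1 iotaD count_cat /= addn0.
rewrite E [in LHS]/= IH; last by lia.
have -> : (k+1 - a.+1 - len = k + 1 - a - len.+1)%N by lia.
have -> : (k+1-a-len.+1 + len = k - a)%N by lia.
by rewrite addnC.
Qed.

Lemma count_iota_sub (p : pred nat) a l a' l' : (a' <= a)%N -> (a + l <= a' + l')%N ->
  (count p (iota a l) <= count p (iota a' l'))%N.
Proof.
move=> h1 h2.
have -> : l' = ((a - a') + (l + (a' + l' - (a + l))))%N by lia.
rewrite iotaD iotaD !count_cat.
have -> : (a' + (a - a') = a)%N by lia.
lia.
Qed.

Lemma count_ge (c N : nat) : count (fun k => (c <= k)%N) (iota 0 N) = (N - c)%N.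
Proof.
elim: N => [|N IH] //.
rewrite -[N.+1]addn1 iotaD count_cat IH /= add0n addn0.
case: (leqP c N) => h; rewrite /=; lia.
Qed.

Lemma min_exists (f : nat -> nat) (l : seq nat) : l <> [::] ->
  exists2 k, k \in l & forall k', k' \in l -> (f k <= f k')%N.
Proof.
elim: l => [//|a l IH] _.
case: l IH => [|b l] IH.
  exists a; first exact: mem_head.
  by move=> k'; rewrite mem_seq1 => /eqP ->.
case: (IH (fun h => ltac:(discriminate h))) => k kl Hk.
case: (leqP (f a) (f k)) => h.
  exists a; first exact: mem_head.
  move=> k'; rewrite in_cons => /orP [/eqP -> //|/Hk]; exact: leq_trans.
exists k; first by rewrite in_cons kl orbT.
move=> k'; rewrite in_cons => /orP [/eqP -> |/Hk //]; exact: ltnW.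
Qed.

Lemma INR_muln a b : INR (a * b)%N = (INR a * INR b)%R.
Proof. by rewrite -mult_INR. Qed.

Lemma INR_expn a b : INR (expn a b) = (INR a ^ b)%R.
Proof. elim: b => [|b IH]; first by rewrite expn0. by rewrite expnS INR_muln IH. Qed.

Lemma INR_subn a b : (b <= a)%N -> INR (a - b)%N = (INR a - INR b)%R.
Proof. move=> h; rewrite minus_INR //; apply/leP. done. Qed.

Lemma INR_addn a b : INR (a + b)%N = (INR a + INR b)%R.
Proof. by rewrite -plus_INR. Qed.

Lemma INR_Z2N z : (0 <= z)%Z -> INR (Z.to_nat z) = IZR z.
Proof. move=> h; by rewrite INR_IZR_INZ Znat.Z2Nat.id. Qed.

Lemma INR_leP {a b} : (INR a <= INR b)%R -> (a <= b)%N.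
Proof. move=> h; apply/leP; exact: INR_le. Qed.

Lemma INR_le' {a b} : (a <= b)%N -> (INR a <= INR b)%R.
Proof. move/leP; exact: le_INR. Qed.

Lemma RlebP a b : Rleb a b -> (a <= b)%R.
Proof. by rewrite /Rleb; case: Rle_dec. Qed.


Lemma sumn_map0 (l : seq nat) : sumn (map (fun _ => 0%N) l) = 0%N.
Proof. by elim: l => //= a l ->. Qed.

Lemma sumn_mapD (g h : nat -> nat) (l : seq nat) :
  sumn (map (fun k => g k + h k)%N l) = (sumn (map g l) + sumn (map h l))%N.
Proof. elim: l => //= a l ->; lia. Qed.

Lemma count_sumn (p : pred nat) (l : seq nat) : count p l = sumn (map (fun k => nat_of_bool (p k)) l).
Proof. by elim: l => //= a l ->. Qed.

Lemma dc (f : nat -> nat -> bool) (l1 l2 : seq nat) :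
  sumn (map (fun b => count (f b) l2) l1) = sumn (map (fun k => count (fun b => f b k) l1) l2).
Proof.
elim: l1 => /= [|b l1 IH]; first by rewrite sumn_map0.
rewrite IH count_sumn -sumn_mapD. by [].
Qed.

Lemma sum_lb (g : nat -> nat) (d : nat) (l : seq nat) :
  (forall k, k \in l -> d <= g k)%N -> (d * size l <= sumn (map g l))%N.
Proof.
elim: l => /= [|a l IH] H; first by rewrite muln0.
have h1 := H a (mem_head _ _).
have h2 : (d * size l <= sumn (map g l))%N.
  by apply: IH => k Hk; apply: H; rewrite in_cons Hk orbT.
rewrite mulnS; lia.
Qed.

Lemma pigeon (f : nat -> nat) (L c : nat) (l : seq nat) :
  (forall b, b \in l -> (f b * L).+1 <= c)%N ->
  (sumn (map f l) * L + size l <= size l * c)%N.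
Proof.
elim: l => /= [|a l IH] H; first by [].
have h1 := H a (mem_head _ _).
have h2 : (sumn (map f l) * L + size l <= size l * c)%N.
  by apply: IH => k Hk; apply: H; rewrite in_cons Hk orbT.
rewrite mulnDl mulSn; lia.
Qed.

Lemma greedy (cov : nat -> nat -> bool) (Bc T : seq nat) (d : nat) :
  (forall k, k \in T -> d <= count (fun b => cov b k) Bc)%N ->
  forall s, exists S : seq nat, (size S <= s)%N /\ {subset S <= Bc} /\
    (count (fun k => ~~ has (fun b => cov b k) S) T * expn (size Bc) s
       <= size T * expn (size Bc - d) s)%N.
Proof.
move=> Hd; elim=> [|s [S [HS1 [HS2 HS3]]]].
  exists [::]; split => //; split => //.

set Ul := filter (fun k => ~~ has (fun b => cov b k) S) T.
have HU : count (fun k => ~~ has (fun b => cov b k) S) T = size Ul by rewrite size_filter.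
case: Bc Hd HS2 HS3 => [|b0 Bc'] Hd HS2 HS3.
  exists S; split; first by lia. split => //.
  by rewrite expnS mul0n muln0.
set Bc := b0 :: Bc' in Hd HS2 HS3 *.
set L := size Bc.
have HL : (0 < L)%N by [].
have Hsum : (d * size Ul <= sumn (map (fun b => count (cov b) Ul) Bc))%N.
  rewrite dc; apply: sum_lb => k; rewrite mem_filter => /andP [_ kT]; exact: Hd.
have [b bB Hb] : exists2 b, b \in Bc & (d * size Ul <= count (cov b) Ul * L)%N.
  case: (boolP [exists i : 'I_(size Bc), d * size Ul <= count (cov (nth 0%N Bc i)) Ul * L])%N.
    move/existsP => [i Hi]; exists (nth 0%N Bc i) => //; exact: mem_nth.
  move/existsPn => Hn.
  have := pigeon (fun b => count (cov b) Ul) L (d * size Ul) Bc.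
  have H1 : forall b, b \in Bc -> ((count (cov b) Ul * L).+1 <= d * size Ul)%N.
    move=> b bB; have := Hn (@Ordinal (size Bc) (index b Bc) (eq_ind_r is_true bB (index_mem b Bc))) .
    rewrite /= nth_index // ltnNge. by [].
  move/(_ H1) => H2.
  have H3 : (d * size Ul * L <= sumn (map (fun b => count (cov b) Ul) Bc) * L)%N by rewrite leq_mul2r Hsum orbT.
  rewrite -/L in H2; nia.
exists (b :: S); split; first by rewrite /=; lia.
split. by move=> z; rewrite in_cons => /orP [/eqP -> | /HS2].
have E : count (fun k => ~~ has (fun b1 => cov b1 k) (b :: S)) T = (size Ul - count (cov b) Ul)%N.
  rewrite -[in RHS](count_predC (cov b) Ul) addKn /Ul count_filter.
  by apply: eq_count => k /=; rewrite negb_or andbC.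
rewrite E -/L.
have Hc : (count (cov b) Ul <= size Ul)%N by apply: count_size.
have K1 : ((size Ul - count (cov b) Ul) * L <= size Ul * (L - d))%N.
  rewrite mulnBl mulnBr; nia.
rewrite expnS mulnA -/L.
rewrite expnS (mulnC (L - d)%N) mulnA.
apply: (@leq_trans (size Ul * (L-d) * expn L s)%N).
  by rewrite leq_mul2r K1 orbT.
rewrite mulnAC; apply: leq_mul => //.
by rewrite -HU.
Qed.

Open Scope R_scope.

Lemma cube_le a b : 0 <= a -> 0 <= b -> a ^ 3 <= b ^ 3 -> a <= b.
Proof.
move=> ha hb h; destruct (Rle_lt_dec a b) as [|hlt]; first by [].
exfalso. have h2 : 0 < (a - b) * (a*a + a*b + b*b) by apply Rmult_lt_0_compat; nra.
simpl in h; nra.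
Qed.

Lemma exp_pow' a s : exp a ^ s = exp (INR s * a).
Proof.
elim: s => [|s IH]; first by rewrite /= Rmult_0_l exp_0.
change (exp a ^ s.+1) with (exp a * exp a ^ s).
rewrite IH -exp_plus S_INR; f_equal; ring.
Qed.

Lemma rr_cube {x} : 0 < x -> Rpower x (1/3) ^ 3 = x.
Proof.
move=> hx; rewrite -Rpower_pow; last by apply: exp_pos.
rewrite Rpower_mult; replace (1/3 * INR 3) with 1 by (simpl; field).
by rewrite Rpower_1.
Qed.

Lemma rr_sq {x} : 0 < x -> Rpower x (2/3) = Rpower x (1/3) ^ 2.
Proof.
move=> hx; rewrite -Rpower_pow; last by apply: exp_pos.
rewrite Rpower_mult; f_equal; simpl; field.
Qed.

Lemma rr_pos x : 0 < Rpower x (1/3).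
Proof. exact: exp_pos. Qed.

Lemma INR_Z2N' z : (0 <= z)%Z -> INR (Z.to_nat z) = IZR z.
Proof. exact: INR_Z2N. Qed.

Lemma floor_nat {r} : 0 <= r -> r - 1 < INR (Z.to_nat (up r - 1)) <= r.
Proof.
move=> hr; have [h1 h2] := archimed r.
have hz : (0 < up r)%Z by apply: lt_IZR; lra.
rewrite INR_Z2N; last by lia.
rewrite minus_IZR; lra.
Qed.

Lemma ceil_nat {r} : 0 <= r -> r < INR (Z.to_nat (up r)) <= r + 1.
Proof.
move=> hr; have [h1 h2] := archimed r.
have hz : (0 < up r)%Z by apply: lt_IZR; lra.
rewrite INR_Z2N; last by lia.
lra.
Qed.

Lemma exp_le' a b : a <= b -> exp a <= exp b.
Proof.
move=> h; case: (Rle_lt_or_eq_dec _ _ h) => [h'|->]; last by lra.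
by apply: Rlt_le; apply: exp_increasing.
Qed.

Lemma ln_le' a b : 0 < a -> a <= b -> ln a <= ln b.
Proof.
move=> ha h; case: (Rle_lt_or_eq_dec _ _ h) => [h'|->]; last by lra.
by apply: Rlt_le; apply: ln_increasing.
Qed.


Section Main.
Variables (eps : R) (n : nat) (A : pred nat).
Hypothesis Heps0 : 0 < eps.
Hypothesis Heps1 : eps < 1/64.
Hypothesis F1 : 3 <= eps * Rpower (INR n) (1/3).
Hypothesis F2 : 1 <= Rpower (INR n) (1/3).
Hypothesis F3 : Rpower (INR n) (1/3) + 2 <= eps * INR n.
Hypothesis F4 : 4 / eps + 2 <= eps * INR n.
Hypothesis hA : forall x m : nat,
          (Rpower (INR n) (1/3) <= INR x)%R -> (INR x <= eps * INR n)%R ->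
          (2 * INR x <= INR m)%R -> (INR m <= 2 / eps * INR x)%R ->
          (INR (count A (iota (m - 2 * x) (x + 1)))
             > eps * Rpower (INR x) (2/3) * ln (INR n / INR x))%R.

Definition u := Rpower (INR n) (1/3).
Definition Mx (x : nat) := Z.to_nat (up (2/eps * INR x) - 1).
Definition rr (x : nat) := Rpower (INR x) (1/3).

Lemma Linv : 64 < / eps.
Proof.
have -> : 64 = / (1/64) by field.
apply: Rinv_lt_contravar => //; nra.
Qed.

Lemma Lie : eps * / eps = 1.
Proof. field; lra. Qed.

Lemma L_Mx x : 2 * / eps * INR x - 1 < INR (Mx x) <= 2 * / eps * INR x.
Proof.
have h : 0 <= 2 / eps * INR x.
  apply: Rmult_le_pos; last exact: pos_INR.
  apply: Rlt_le; apply: Rdiv_lt_0_compat; lra.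
have := floor_nat h; rewrite /Mx /Rdiv; lra.
Qed.

Lemma rr_props x : 1 <= INR x -> 1 <= rr x /\ rr x ^ 3 = INR x /\ Rpower (INR x) (2/3) = rr x ^ 2.
Proof.
move=> hx; have hx0 : 0 < INR x by lra.
have c := rr_cube hx0; have s := rr_sq hx0.
split; last by split.
apply: cube_le; try lra; first by apply: Rlt_le; apply: rr_pos.
rewrite /rr c; simpl; lra.
Qed.

Lemma scale (x : nat) : u <= INR x -> INR x <= eps * INR n ->
  exists G : seq nat, (forall b, b \in G -> (x <= b)%nat && (b <= 2 * x)%nat) /\
    INR (size G) <= 7 * rr x / eps /\
    INR (count (fun k => ~~ sumset_mem A G k) (iota (2 * x) (Mx x + 1 - 2 * x)))
      <= eps * INR x / 16.
Proof.
move=> hux hxn.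
have hx1 : 1 <= INR x by rewrite /u in hux; lra.
have [rr1 [rr3 rr2]] := rr_props _ hx1.
have ie := Linv. have iee := Lie.
have Mxb := L_Mx x.
have h2x : (2 * x <= Mx x)%nat.
  apply: INR_leP; rewrite INR_muln; simpl (INR 2).
  have : 128 * INR x <= 2 * / eps * INR x by nra.
  nra.
set T := iota (2 * x) (Mx x + 1 - 2 * x).
set Bc := iota x (x + 1).
set cov := fun b k => ((b <= k)%nat && A (k - b)%nat).
have Tne : T <> [::].
  by rewrite /T; case E: (Mx x + 1 - 2 * x)%nat => [|m] //; lia.
have [k0 k0T Hk0] := min_exists (fun k => count (cov^~k) Bc) T Tne.
set d := count (cov^~k0) Bc.
have Hcnt : forall k, k \in T -> count (cov^~k) Bc = count A (iota (k - 2 * x) (x + 1)).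
  move=> k; rewrite mem_iota => /andP [h1 h2].
  rewrite (@eq_in_count _ _ (fun b => A (k - b)%nat)); last first.
    move=> b; rewrite mem_iota => /andP [b1 b2]; rewrite /cov.
    have -> : (b <= k)%nat by lia.
    by [].
  rewrite count_rev_iota; last by lia.
  by have -> : (k + 1 - x - (x + 1) = k - 2 * x)%nat by lia.
have Hd : INR d > eps * Rpower (INR x) (2/3) * ln (INR n / INR x).
  rewrite /d Hcnt //; move: k0T; rewrite mem_iota => /andP [h1 h2].
  apply: hA => //.
    by have := INR_le' h1; rewrite INR_muln.
  have : (k0 <= Mx x)%nat by lia.
  move/INR_le'; rewrite /Rdiv; lra.
have hn0 : 0 < INR n.
  have : 0 < eps * INR n by lra.
  move=> h; apply: (Rmult_lt_reg_l eps) => //; lra.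
have lneps : ln eps < 0.
  rewrite -ln_1; apply: ln_increasing => //; lra.
set lam := - ln eps.
have lnb : lam <= ln (INR n / INR x).
  rewrite /lam -ln_Rinv //; apply: ln_le'.
    apply: Rinv_0_lt_compat => //.
  apply: (Rmult_le_reg_l eps) => //; rewrite iee.
  have -> : eps * (INR n / INR x) = eps * INR n / INR x by field; lra.
  apply: (Rmult_le_reg_r (INR x)); first lra.
  have -> : eps * INR n / INR x * INR x = eps * INR n by field; lra.
  lra.
have rr0 : 0 < rr x by lra.
have Hd2 : eps * rr x ^ 2 * lam <= INR d.
  rewrite rr2 in Hd.
  have : eps * rr x ^ 2 * lam <= eps * rr x ^ 2 * ln (INR n / INR x).
    apply: Rmult_le_compat_l => //; apply: Rmult_le_pos; [lra| apply: pow_le; lra].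
  lra.
have hs0 : 0 <= 6 * rr x / eps.
  apply: Rlt_le; apply: Rdiv_lt_0_compat; lra.
have [hs1 hs2] := ceil_nat hs0.
set s := Z.to_nat (up (6 * rr x / eps)) in hs1 hs2.
have [S [HS1 [HS2 HS3]]] := greedy cov Bc T d (fun k kT => Hk0 k kT) s.
exists S; split.
  move=> b /HS2; rewrite mem_iota => /andP [b1 b2].
  apply/andP; split; lia.
split.
  apply: (Rle_trans _ (INR s)); first exact: INR_le'.
  rewrite /Rdiv in hs2 *.
  have : 1 <= rr x * / eps by nra.
  lra.
have hL : size Bc = (x + 1)%nat by rewrite /Bc size_iota.
have hT : size T = (Mx x + 1 - 2 * x)%nat by rewrite /T size_iota.
have dL : (d <= x + 1)%nat by rewrite -hL; apply: count_size.
move/INR_le': HS3; rewrite !INR_muln !INR_expn INR_subn; last by rewrite hL.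
rewrite hL hT INR_subn; last by lia.
rewrite !INR_addn ?INR_muln ?mult_INR /= => HS3.
change (count (fun k => ~~ has (fun b => cov b k) S) T) with
   (count (fun k => ~~ sumset_mem A S k) T) in HS3.
set U := INR (count _ T) in HS3 *.
set Lr := INR x + 1 in HS3.
set dr := INR d in HS3 Hd2.
have dLr : dr <= Lr by rewrite /dr /Lr; have := INR_le' dL; rewrite INR_addn /=.
have Lr0 : 0 < Lr by rewrite /Lr; lra.
set q := (Lr - dr) / Lr.
have q0 : 0 <= q by apply: Rmult_le_pos; [lra | apply: Rlt_le; apply: Rinv_0_lt_compat].
have qe : q <= exp (- (dr / Lr)).
  have := exp_ineq1_le (- (dr / Lr)).
  have -> : q = 1 + - (dr / Lr) by rewrite /q; field; lra.
  lra.
have Hq : (Lr - dr) ^ s = q ^ s * Lr ^ s.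
  rewrite -Rpow_mult_distr; f_equal; rewrite /q; field; lra.
rewrite Hq in HS3.
have Ls0 : 0 < Lr ^ s by apply: pow_lt.
have HU1 : U <= (INR (Mx x) + 1 - 2 * INR x) * q ^ s.
  apply: (Rmult_le_reg_r (Lr ^ s)) => //.
  apply: (Rle_trans _ _ _ HS3); right; ring.
have Hqs : q ^ s <= eps ^ 3.
  apply: (Rle_trans _ (exp (- (dr / Lr)) ^ s)); first by apply: pow_incr; lra.
  rewrite exp_pow' -(exp_ln eps) // exp_pow'.
  apply: exp_le'.
  have h6 : 6 * rr x / eps * (eps * rr x ^ 2 * lam) = 6 * INR x * lam.
    rewrite -rr3; field; lra.
  have lam0 : 0 < lam by rewrite /lam; lra.
  have h7 : 6 * rr x / eps * (eps * rr x ^ 2 * lam) <= INR s * dr.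
    apply: Rmult_le_compat; try lra.
      apply: Rmult_le_pos; [apply: Rmult_le_pos; [lra | apply: pow_le; lra] | lra].
  have h8 : 3 * Lr * lam <= INR s * dr by rewrite /Lr; nra.
  have h9 : 3 * lam <= INR s * (dr / Lr).
    apply: (Rmult_le_reg_r Lr) => //.
    have -> : INR s * (dr / Lr) * Lr = INR s * dr by field; lra.
    lra.
  rewrite /lam in h9; simpl (INR 3); lra.
have HT : INR (Mx x) + 1 - 2 * INR x <= 3 * INR x / eps.
  rewrite /Rdiv; nra.
have HT0 : 0 <= INR (Mx x) + 1 - 2 * INR x.
  have := INR_le' h2x; rewrite ?INR_muln ?mult_INR; simpl (INR 2); lra.
have : U <= 3 * INR x / eps * eps ^ 3.
  apply: (Rle_trans _ _ _ HU1).
  apply: Rmult_le_compat => //; apply: pow_le; lra.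
have -> : 3 * INR x / eps * eps ^ 3 = 3 * INR x * eps * eps by field; lra.
move=> h; apply: (Rle_trans _ _ _ h).
have hx0 : 0 <= eps * INR x by nra.
have : (eps * INR x) * (3 * eps) <= (eps * INR x) * (1/16) by apply: Rmult_le_compat_l => //; lra.
lra.
Qed.




Lemma h2x_lem x : 1 <= INR x -> (2 * x <= Mx x)%nat.
Proof.
move=> hx1; have ie := Linv; have Mxb := L_Mx x.
apply: INR_leP; rewrite ?INR_muln ?mult_INR; simpl (INR 2).
have : 128 * INR x <= 2 * / eps * INR x by nra.
nra.
Qed.

Lemma L3 x z : (1 <= z)%nat -> (x <= 8 * z + 7)%nat -> (3 * x <= Mx z)%nat.
Proof.
move=> hz hx; have ie := Linv; have Mxb := L_Mx z.
have hz' := INR_le' hz; have hx' := INR_le' hx.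
rewrite ?INR_addn ?INR_muln ?mult_INR in hx'; simpl in hz', hx'.
apply: INR_leP; rewrite ?INR_muln ?mult_INR; simpl (INR 3).
have : 128 * INR z <= 2 * / eps * INR z by nra.
nra.
Qed.

Definition x0 := Z.to_nat (up u).

Lemma L_x0 : u < INR x0 <= u + 1.
Proof. apply: ceil_nat; rewrite /u; lra. Qed.

Definition bad (B : seq nat) (k : nat) := Rleb (2 * u) (INR k) && ~~ sumset_mem A B k.

Definition Cov (B : seq nat) (T1 : nat) := forall t : nat, 2 * u <= INR t -> (t <= T1)%nat ->
  INR (count (bad B) (iota 0 (t + 1))) <= eps * INR t / 2.

Lemma sumset_sub B1 B2 k : {subset B1 <= B2} -> sumset_mem A B1 k -> sumset_mem A B2 k.
Proof. move=> hs /hasP [b bB hb]; apply/hasP; exists b => //; exact: hs. Qed.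

Lemma count_bad_sub B1 B2 l : {subset B1 <= B2} -> (count (bad B2) l <= count (bad B1) l)%nat.
Proof.
move=> hs; apply: sub_count => k /andP [h1 h2]; apply/andP; split => //.
apply/negP => /(sumset_sub _ _ _ hs) h; by rewrite h in h2.
Qed.

Lemma base : exists G : seq nat, (forall b, b \in G -> (x0 <= b)%nat && (b <= 2 * x0)%nat) /\
    INR (size G) <= 7 * rr x0 / eps /\ Cov G (Mx x0).
Proof.
have [hx0a hx0b] := L_x0.
have hu : u <= INR x0 by lra.
have hxn : INR x0 <= eps * INR n by rewrite /u in hx0b *; lra.
have [G [HG1 [HG2 HG3]]] := scale x0 hu hxn.
exists G; split => //; split => //.
have hx1 : 1 <= INR x0 by rewrite /u in hu; lra.
have h2 := h2x_lem x0 hx1.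
move=> t ht htM.
apply: (Rle_trans _ (INR (count (bad G) (iota 0 (Mx x0 + 1))))).
  apply: INR_le'; apply: count_iota_sub => //; lia.
have -> : (Mx x0 + 1 = 2 * x0 + (Mx x0 + 1 - 2 * x0))%nat by lia.
rewrite iotaD count_cat INR_addn add0n.
have P1 : (count (bad G) (iota 0 (2 * x0)) <= 2)%nat.
  apply: (leq_trans (n := count (fun k => (2 * x0 - 2 <= k)%nat) (iota 0 (2 * x0)))).
    apply: sub_count => k /andP [hk _].
    have hk' := RlebP _ _ hk.
    have x01 : (1 <= x0)%nat by apply: INR_leP; simpl; lra.
    apply: INR_leP; rewrite INR_subn; last by lia.
    rewrite ?INR_muln ?mult_INR; simpl (INR 2); lra.
  rewrite count_ge; lia.
have P2 : (count (bad G) (iota (2 * x0) (Mx x0 + 1 - 2 * x0)) <=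
           count (fun k => ~~ sumset_mem A G k) (iota (2 * x0) (Mx x0 + 1 - 2 * x0)))%nat.
  by apply: sub_count => k /andP [].
have P1' := INR_le' P1. have P2' := INR_le' P2.
simpl in P1'.
have : 3 <= eps * u by rewrite /u; lra.
have : 0 < eps * INR x0 by nra.
rewrite /Rdiv; nra.
Qed.

Lemma combine B1 G T1 x : Cov B1 T1 -> u <= INR x -> (3 * x <= T1)%nat ->
  INR (count (fun k => ~~ sumset_mem A G k) (iota (2 * x) (Mx x + 1 - 2 * x))) <= eps * INR x / 16 ->
  Cov (B1 ++ G) (Mx x).
Proof.
move=> hC hux h3 hG t ht htM.
have hs : {subset B1 <= B1 ++ G} by move=> z hz; rewrite mem_cat hz.
case: (leqP t T1) => htT.
  apply: (Rle_trans _ _ _ (INR_le' (count_bad_sub _ _ (iota 0 (t + 1)) hs))).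
  exact: hC.
have hx1 : 1 <= INR x by rewrite /u in hux; lra.
have h2 := h2x_lem x hx1.
have -> : (t + 1 = (2 * x + 1) + (t - 2 * x))%nat by lia.
rewrite iotaD count_cat INR_addn add0n.
have P1 : INR (count (bad (B1 ++ G)) (iota 0 (2 * x + 1))) <= eps * INR (2 * x) / 2.
  apply: (Rle_trans _ _ _ (INR_le' (count_bad_sub _ _ _ hs))).
  apply: hC; last by lia.
  rewrite ?INR_muln ?mult_INR; simpl (INR 2); lra.
have P2 : (count (bad (B1 ++ G)) (iota (2 * x + 1) (t - 2 * x)) <=
    count (fun k => ~~ sumset_mem A G k) (iota (2 * x) (Mx x + 1 - 2 * x)))%nat.
  apply: (leq_trans (n := count (fun k => ~~ sumset_mem A G k) (iota (2 * x + 1) (t - 2 * x)))).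
    apply: sub_count => k /andP [_ h]; apply/negP => h'; move/negP: h; apply.
    by apply: (sumset_sub G) => // z hz; rewrite mem_cat hz orbT.
  apply: count_iota_sub; lia.
have P2' := INR_le' P2.
have ht3 : 3 * INR x <= INR t.
  have := INR_le' (ltnW (leq_ltn_trans h3 htT)).
  rewrite ?INR_muln ?mult_INR => h; simpl in h; lra.
rewrite ?INR_muln ?mult_INR in P1; simpl (INR 2) in P1.
have : 0 < eps * INR x by nra.
rewrite /Rdiv in P1 hG *; nra.
Qed.


Lemma rr_mono a b : (1 <= a)%nat -> (a <= b)%nat -> rr a <= rr b.
Proof.
move=> h1 h2; apply: Rle_Rpower_l; first lra.
have := INR_le' h1; have := INR_le' h2; simpl; lra.
Qed.

Lemma rr_8 y x : (1 <= y)%nat -> (8 * y <= x)%nat -> 2 * rr y <= rr x.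
Proof.
move=> h1 h2.
have hy : 1 <= INR y by have := INR_le' h1.
have hx' := INR_le' h2; rewrite ?INR_muln ?mult_INR in hx'; simpl (INR 8) in hx'.
have hx : 1 <= INR x by lra.
have [ry1 [ry3 _]] := rr_props _ hy.
have [rx1 [rx3 _]] := rr_props _ hx.
apply: cube_le; try lra.
Qed.

Lemma induct N : forall x, (x < N)%nat -> (x0 <= x)%nat -> INR x <= eps * INR n ->
  exists B : seq nat, (forall b, b \in B -> (x0 <= b)%nat && (b <= 2 * x)%nat) /\
    INR (size B) <= 14 * rr x / eps + 7 * rr x0 / eps /\ Cov B (Mx x).
Proof.
have [hx0a hx0b] := L_x0.
have x01 : (1 <= x0)%nat by apply: INR_leP; simpl; rewrite /u in hx0a; lra.
have rr0 : forall z, 0 <= rr z / eps.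
  move=> z; apply: Rlt_le; apply: Rdiv_lt_0_compat => //; exact: rr_pos.
elim: N => [//|N IH] x hxN hx0 hxn.
case: (leqP x x0) => hxx0.
  have -> : x = x0 by apply/eqP; rewrite eqn_leq hxx0 hx0.
  have [G [HG1 [HG2 HG3]]] := base.
  exists G; split => //; split => //.
  have := rr0 x0; rewrite /Rdiv in HG2 *; lra.
have hux : u <= INR x.
  have := INR_le' hx0; lra.
have [G [HG1 [HG2 HG3]]] := scale x hux hxn.
have hx1 : (1 <= x)%nat by lia.
case: (leqP (x %/ 8) x0) => hy.
  have [B0 [HB1 [HB2 HB3]]] := base.
  exists (B0 ++ G); split.
    move=> b; rewrite mem_cat => /orP [/HB1 | /HG1] /andP [h1 h2]; apply/andP; split; lia.
  split.
    rewrite size_cat INR_addn.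
    have := rr_mono _ _ x01 (ltnW hxx0).
    have := rr0 x. have := rr0 x0.
    rewrite /Rdiv in HB2 HG2 *. 
    have ie : 0 < / eps by apply: Rinv_0_lt_compat.
    nra.
  apply: (combine _ _ (Mx x0)) => //.
  apply: L3 => //; lia.
set y := (x %/ 8)%nat in hy.
have hyN : (y < N)%nat by rewrite /y; lia.
have hyn : INR y <= eps * INR n.
  have : (y <= x)%nat by rewrite /y; lia.
  move/INR_le'; lra.
have [B1 [HB1 [HB2 HB3]]] := IH y hyN (ltnW hy) hyn.
exists (B1 ++ G); split.
  move=> b; rewrite mem_cat => /orP [/HB1 | /HG1] /andP [h1 h2]; apply/andP; split; rewrite /y in h2; lia.
split.
  rewrite size_cat INR_addn.
  have h8 := rr_8 y x (leq_trans x01 (ltnW hy)) (ltac:(rewrite /y; lia)).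
  have ie : 0 < / eps by apply: Rinv_0_lt_compat.
  rewrite /Rdiv in HB2 HG2 *.
  nra.
apply: (combine _ _ (Mx y)) => //.
apply: L3; rewrite /y; lia.
Qed.

Lemma final : exists B : seq nat, uniq B /\
  (forall b : nat, b \in B -> u <= INR b /\ INR b <= 2 * eps * INR n) /\
  INR (size B) <= 21 * Rpower eps (-2/3) * u /\
  forall t : nat, 2 * u <= INR t -> INR t <= 2 * INR n ->
    INR (count (fun k => Rleb (2 * u) (INR k) && ~~ sumset_mem A B k) (iota 0 (t + 1)))
      <= eps * INR t.
Proof.
have f1 := F1; have f2 := F2; have f3 := F3; have f4 := F4.
rewrite -/u in f1 f2 f3.
have [hx0a hx0b] := L_x0.
have hen : 0 <= eps * INR n by lra.
have [hXa hXb] := floor_nat hen.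
set X := Z.to_nat (up (eps * INR n) - 1) in hXa hXb.
have hx0X : (x0 <= X)%nat by apply: INR_leP; lra.
have [B [HB1 [HB2 HB3]]] := induct X.+1 X (ltnSn X) hx0X hXb.
have ie : 0 < / eps by apply: Rinv_0_lt_compat.
have iee := Lie.
have ie64 := Linv.
exists (undup B); split; first exact: undup_uniq.
split.
  move=> b; rewrite mem_undup => /HB1 /andP [h1 h2].
  have := INR_le' h1; have := INR_le' h2; rewrite ?INR_muln ?mult_INR; simpl (INR 2).
  lra.
have x01 : (1 <= x0)%nat by apply: INR_leP; simpl; lra.
split.
  apply: (Rle_trans _ _ _ (INR_le' (size_undup B))).
  apply: (Rle_trans _ _ _ HB2).
  have hX0 : 0 < INR X by have := INR_le' (leq_trans x01 hx0X); simpl; lra.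
  have m1 := rr_mono _ _ x01 hx0X.
  have hn0 : 0 < INR n.
    case: (Rle_lt_dec (INR n) 0) => h //; nra.
  have m2 : rr X <= Rpower eps (1/3) * u.
    rewrite /rr /u Rpower_mult_distr //.
    apply: Rle_Rpower_l; lra.
  have e1 : Rpower eps (-2/3) = Rpower eps (1/3) * / eps.
    have -> : -2/3 = 1/3 + - (1) by field.
    by rewrite Rpower_plus Rpower_Ropp Rpower_1.
  rewrite e1 /Rdiv.
  have r0 : 0 <= rr x0 by apply: Rlt_le; apply: rr_pos.
  nra.
move=> t ht1 ht2.
have Ecount : count (fun k => Rleb (2 * u) (INR k) && ~~ sumset_mem A (undup B) k) (iota 0 (t + 1))
    = count (bad B) (iota 0 (t + 1)).
  by apply: eq_count => k; rewrite /bad /sumset_mem has_undup.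
rewrite Ecount.
have ht0 : 0 <= INR t by apply: pos_INR.
case: (leqP t (Mx X)) => htM.
  have := HB3 t ht1 htM; nra.
have MxB := L_Mx X.
have n64 : eps * INR n <= INR n / 64 by rewrite /Rdiv; nra.
have k1 : / eps * INR X > / eps * (eps * INR n - 1) by apply: Rmult_lt_compat_l.
have k2 : / eps * (eps * INR n - 1) = INR n - / eps by field; lra.
rewrite /Rdiv in f4 n64.
have hMx2u : 2 * u <= INR (Mx X) by lra.
have -> : (t + 1 = (Mx X + 1) + (t - Mx X))%nat by lia.
rewrite iotaD count_cat INR_addn add0n.
have P1 := HB3 (Mx X) hMx2u (leqnn _).
have P2 := INR_le' (count_size (bad B) (iota (Mx X + 1) (t - Mx X))).
rewrite size_iota INR_subn in P2; last by lia.
have htM' := INR_le' (ltnW htM).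
have ent : eps * INR n <= eps * INR t.
  apply: Rmult_le_compat_l; first lra.
  lra.
rewrite /Rdiv in P1; nra.
Qed.
End Main.

Close Scope R_scope.

Theorem lemma5p1 :
  exists eps0 : R, exists C : R,
    (0 < eps0)%R /\ (eps0 < 1/2)%R /\ (0 < C)%R /\
    forall (eps : R) (n : nat) (A : pred nat),
      (0 < eps)%R -> (eps < eps0)%R ->
      (INR n > 10^5 * Rpower eps (-9/2))%R ->
      (forall x m : nat,
          (Rpower (INR n) (1/3) <= INR x)%R -> (INR x <= eps * INR n)%R ->
          (2 * INR x <= INR m)%R -> (INR m <= 2 / eps * INR x)%R ->
          (* |A ∩ [[m-2x, m-x]]| ; note m >= 2x *)
          (INR (count A (iota (m - 2 * x) (x + 1)))
             > eps * Rpower (INR x) (2/3) * ln (INR n / INR x))%R) ->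
      exists B : seq nat,
        uniq B /\
        (forall b : nat, b \in B ->
            (Rpower (INR n) (1/3) <= INR b)%R /\ (INR b <= 2 * eps * INR n)%R) /\
        (INR (size B) <= C * Rpower eps (-2/3) * Rpower (INR n) (1/3))%R /\
        forall t : nat,
          (2 * Rpower (INR n) (1/3) <= INR t)%R -> (INR t <= 2 * INR n)%R ->
          (* |[[2 n^(1/3), t]] \ (A + B)| *)
          (INR (count (fun k => Rleb (2 * Rpower (INR n) (1/3)) (INR k)
                                && ~~ sumset_mem A B k)
                      (iota 0 (t + 1)))
             <= eps * INR t)%R.
Proof.
exists (1/64)%R, 21%R.
split; first lra. split; first lra. split; first lra.
move=> eps n A he0 he1 hn hA.
set w := Rpower eps (-1/2).
have w0 : (0 < w)%R by apply: exp_pos.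
have w2 : (w ^ 2 = / eps)%R.
  rewrite /w -Rpower_pow // Rpower_mult.
  replace (-1/2 * INR 2)%R with (- (1))%R by (simpl; field).
  by rewrite Rpower_Ropp Rpower_1.
have w9 : (w ^ 9 = Rpower eps (-9/2))%R.
  rewrite /w -Rpower_pow // Rpower_mult.
  f_equal; simpl; field.
have e5 : (10 ^ 5 = 100000)%R by ring.
rewrite -w9 e5 in hn.
have w9p : (0 < w ^ 9)%R by apply: pow_lt.
have hn0 : (0 < INR n)%R by lra.
have u3 := rr_cube hn0.
set u := Rpower (INR n) (1/3) in u3 hA *.
have u0 : (0 < u)%R by apply: exp_pos.
have ew : (eps * w ^ 2 = 1)%R by rewrite w2; field; lra.
have w8 : (8 < w)%R.
  case: (Rle_lt_dec w 8) => h //.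
  have : (w ^ 2 <= 8 ^ 2)%R by apply: pow_incr; lra.
  simpl in ew |- *; nra.
have w3 : (512 <= w ^ 3)%R.
  have : (8 ^ 3 <= w ^ 3)%R by apply: pow_incr; lra.
  simpl; lra.
have hu : (46 * w ^ 3 < u)%R.
  case: (Rle_lt_dec u (46 * w ^ 3)) => h //.
  have : (u ^ 3 <= (46 * w ^ 3) ^ 3)%R by apply: pow_incr; lra.
  have -> : ((46 * w ^ 3) ^ 3 = 97336 * w ^ 9)%R by ring.
  lra.
have epsu : (46 * w <= eps * u)%R.
  have h1 : (eps * (46 * w ^ 3) <= eps * u)%R by apply: Rmult_le_compat_l; lra.
  have -> : (46 * w = eps * (46 * w ^ 3))%R.
    have -> : (eps * (46 * w ^ 3) = 46 * w * (eps * w ^ 2))%R by ring.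
    rewrite ew; ring.
  exact: h1.
have F1 : (3 <= eps * u)%R by lra.
have F2 : (1 <= u)%R by lra.
have en : (eps * INR n = (eps * u) * u ^ 2)%R by rewrite -u3; ring.
have F3 : (u + 2 <= eps * INR n)%R.
  rewrite en.
  have : (368 * u ^ 2 <= (eps * u) * u ^ 2)%R.
    apply: Rmult_le_compat_r; [apply: pow_le; lra | lra].
  simpl; nra.
have F4 : (4 / eps + 2 <= eps * INR n)%R.
  rewrite en /Rdiv -w2.
  have : (368 * u ^ 2 <= (eps * u) * u ^ 2)%R.
    apply: Rmult_le_compat_r; [apply: pow_le; lra | lra].
  have : (w ^ 2 <= u)%R.
    have : (w ^ 2 <= w ^ 3)%R by simpl; nra.
    lra.
  simpl; nra.
have := final eps n A he0 he1 F1 F2 F3 F4 hA.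
by [].
Qed.
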